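(* Let $n\ge1$, $l\ge n$, let $(a_{ik})$ be a real $l\times n$ matrix, let $E_1,\dots,E_l\subset\mathbb{R}^n$ be measurable sets of finite measure, and let $1\le t\le n$. Then $$\sup_{y_j\in\mathcal{S}_{e_t}(E_j),\,j=1,\dots,l}\det\Big(0,\sum_{i=1}^{l}a_{i1}y_i,\dots,\sum_{i=1}^{l}a_{in}y_i\Big)\le\sup_{y_j\in E_j,\,j=1,\dots,l}\det\Big(0,\sum_{i=1}^{l}a_{i1}y_i,\dots,\sum_{i=1}^{l}a_{in}y_i\Big).$$ In particular (taking appropriate matrices $(a_{ik})$), $\sup_{y_j\in\mathcal{S}_{e_t}(E_j)}\det(0,y_1,\dots,y_n)\le\sup_{y_j\in E_j}\det(0,y_1,\dots,y_n)$ and $\sup_{y_j\in\mathcal{S}_{e_t}(E_j)}\det(y_1,\dots,y_{n+1})\le\sup_{y_j\in E_j}\det(y_1,\dots,y_{n+1})$.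
   Context: $\{e_1,\dots,e_n\}$ is the standard basis of $\mathbb{R}^n$. For $z_1,\dots,z_n\in\mathbb{R}^n$, $\det(0,z_1,\dots,z_n)$ denotes $|\det M|$ where $M$ is the $n\times n$ matrix with columns $z_1,\dots,z_n$. For $y_1,\dots,y_{n+1}\in\mathbb{R}^n$, $\det(y_1,\dots,y_{n+1})$ denotes the absolute value of the determinant of the matrix with columns $y_1-y_{n+1},\dots,y_n-y_{n+1}$ (equal to $n!$ times the volume of the simplex with these vertices). For a unit vector $u\in\mathbb{R}^n$ and a measurable $A\subset\mathbb{R}^n$, the Steiner symmetrisation is $\mathcal{S}_u(A)=\{tu+y:\ y\in u^\perp,\ A\cap(\mathbb{R}u+y)\neq\emptyset,\ |t|\le |A\cap(\mathbb{R}u+y)|/2\}$, where $|A\cap(\mathbb{R}u+y)|$ is one-dimensional Lebesgue measure on the line $\mathbb{R}u+y$. *)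

(* Defs.v *)
From HB Require Import structures.
From mathcomp Require Import all_boot all_order all_algebra.
From mathcomp Require Import all_classical all_reals all_analysis.
Set Implicit Arguments. Unset Strict Implicit. Unset Printing Implicit Defensive.
Import Order.TTheory GRing.Theory Num.Theory.
Local Open Scope classical_set_scope.
Local Open Scope ring_scope.

Definition ebasis (R : realType) (n : nat) (t : 'I_n) : 'rV[R]_n :=
  \row_(j < n) (j == t)%:R.

Definition box (R : realType) (n : nat) (a b : 'rV[R]_n) : set 'rV[R]_n :=
  [set x | forall i, a ord0 i <= x ord0 i <= b ord0 i].
Definition box_vol (R : realType) (n : nat) (a b : 'rV[R]_n) : R :=
  \prod_(i < n) (b ord0 i - a ord0 i).

Definition leb_outer (R : realType) (n : nat) (A : set 'rV[R]_n) : \bar R :=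
  ereal_inf [set (\sum_(0 <= k <oo) (box_vol (ab.1 k) (ab.2 k))%:E)%E
            | ab in [set ab : (nat -> 'rV[R]_n) * (nat -> 'rV[R]_n) |
                (forall k i, ab.1 k ord0 i <= ab.2 k ord0 i) /\
                A `<=` \bigcup_k box (ab.1 k) (ab.2 k)]].

Definition leb_measurable (R : realType) (n : nat) (A : set 'rV[R]_n) : Prop :=
  (@leb_outer R n).-caratheodory A.

Definition section_measure (R : realType) (n : nat) (t : 'I_n)
    (A : set 'rV[R]_n) (y : 'rV[R]_n) : \bar R :=
  leb_outer [set r : 'rV[R]_1 | A (y + r ord0 ord0 *: ebasis R t)].

(* Steiner symmetrisation S_{e_t}(A): points s e_t + y with y ⊥ e_t,
   the line through y meets A, and |s| <= |A ∩ line| / 2. *)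
Definition steiner (R : realType) (n : nat) (t : 'I_n) (A : set 'rV[R]_n)
  : set 'rV[R]_n :=
  [set x : 'rV[R]_n | let y : 'rV[R]_n := x - x ord0 t *: ebasis R t in
     (exists s : R, A (y + s *: ebasis R t)) /\
     ((`|x ord0 t| *+ 2)%:E <= section_measure t A y)%E].

(* det(0, sum_i a_i1 y_i, ..., sum_i a_in y_i): |det| of the n x n matrix
   whose k-th column is sum_i a_ik y_i. *)
Definition comb_det (R : realType) (l n : nat) (a : 'M[R]_(l, n))
  (y : 'I_l -> 'rV[R]_n) : R :=
  `| \det (\matrix_(j < n, k < n) \sum_(i < l) a i k * y i ord0 j) |.

Definition sup_comb_det (R : realType) (l n : nat) (a : 'M[R]_(l, n))
  (F : 'I_l -> set 'rV[R]_n) : \bar R :=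
  ereal_sup [set (comb_det a y)%:E | y in [set y : 'I_l -> 'rV[R]_n | forall j, F j (y j)]].

(* Main.v *)
Require Import Defs.
From HB Require Import structures.
From mathcomp Require Import all_boot all_order all_algebra.
From mathcomp Require Import all_classical all_reals all_analysis.
Import Order.TTheory GRing.Theory Num.Theory.
Local Open Scope classical_set_scope.
Local Open Scope ring_scope.
From mathcomp Require Import lra.
Lemma outer_le (R : realType) (A : set 'rV[R]_1) (c D : R) :
  0 <= D -> (forall r, A r -> c - D <= r ord0 ord0 <= c) ->
  (leb_outer A <= D%:E)%E.
Proof.
move=> D0 HA; rewrite /leb_outer; apply: ge_ereal_inf.
pose ab := ((fun k : nat => if k == 0%N then const_mx (c - D) else (0 : 'rV[R]_1)),
            (fun k : nat => if k == 0%N then const_mx c else (0 : 'rV[R]_1))).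
exists (\sum_(0 <= k <oo) (box_vol (ab.1 k) (ab.2 k))%:E)%E.
  exists ab => //; split.
    move=> [|k] i /=; rewrite ?mxE ?lerBlDr ?lerDl //.
  move=> r Ar; exists 0%N => // i; rewrite !mxE; rewrite (ord1 i); exact: HA.
rewrite (nneseries_split 0 1).
  rewrite eseries0 ?adde0.
    by rewrite big_nat1 /= /box_vol big_ord1 !mxE opprB addrC subrK.
  by move=> [|k] //= _ _; rewrite /box_vol big_ord1 !mxE subrr.
move=> [|k] _ /=; rewrite /box_vol big_ord1 !mxE ?subrr // lee_fin.
by rewrite opprB addrC subrK.
Qed.
Lemma spread (R : realType) (A : set 'rV[R]_1) (D : R) :
  (exists r, A r) -> (D%:E < leb_outer A)%E ->
  exists u v, A u /\ A v /\ D < u ord0 ord0 - v ord0 ord0.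
Proof.
move=> [x0 Ax0] HD.
have [//|H] := pselect (exists u v, A u /\ A v /\ D < u ord0 ord0 - v ord0 ord0).
exfalso.
have Hle : forall u v, A u -> A v -> u ord0 ord0 - v ord0 ord0 <= D.
  move=> u v Au Av; rewrite leNgt; apply/negP => Hlt; apply: H; by exists u, v.
have D0 : 0 <= D by have := Hle _ _ Ax0 Ax0; rewrite subrr.
pose S := [set r ord0 ord0 | r in A].
have S0 : S !=set0 by exists (x0 ord0 ord0), x0.
have hS : has_sup S.
  split => //; exists (x0 ord0 ord0 + D) => _ [r Ar <-].
  by rewrite -lerBlDl Hle.
have : (leb_outer A <= D%:E)%E.
  apply: (@outer_le _ _ (sup S)) => // r Ar; apply/andP; split.
    rewrite lerBlDr; apply: ge_sup => // _ [u Au <-].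
    have := Hle u r Au Ar; lra.
  by apply: sup_upper_bound => //; exists r.
by rewrite leNgt HD.
Qed.
Lemma det_lin (R : realType) (n l : nat) (a : 'M[R]_(l, n)) (t : 'I_n)
  (p : 'I_l -> 'rV[R]_n) : (forall i, p i ord0 t = 0) ->
  exists b : 'I_l -> R, forall s : 'I_l -> R,
   \det (\matrix_(j < n, k < n) \sum_(i < l) a i k * (p i + s i *: ebasis R t) ord0 j)
   = \sum_i b i * s i.
Proof.
move=> pt.
pose M (s : 'I_l -> R) := \matrix_(j < n, k < n) \sum_(i < l) a i k * (p i + s i *: ebasis R t) ord0 j.
exists (fun i => \sum_k a i k * cofactor (M (fun=> 0)) t k) => s.
rewrite -/(M s) (expand_det_row _ t).
have Ecof k : cofactor (M s) t k = cofactor (M (fun=>0)) t k.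
  rewrite /cofactor; congr (_ * \det _); apply/matrixP => i j; rewrite !mxE.
  apply: eq_bigr => i' _; rewrite !mxE eq_sym (negbTE (neq_lift t i)) mulr0.
  by rewrite !mul0r !addr0.
under eq_bigr => k _ do rewrite Ecof.
have Et k : M s t k = \sum_i a i k * s i.
  rewrite mxE; apply: eq_bigr => i _; rewrite !mxE pt eqxx mulr1 add0r //.
under eq_bigr => k _ do rewrite Et big_distrl.
rewrite exchange_big /=; apply: eq_bigr => i _; rewrite big_distrl /=.
by apply: eq_bigr => k _; rewrite mulrAC.
Qed.

Theorem mainTheorem8 (R : realType) (n l : nat) (a : 'M[R]_(l, n))
  (E : 'I_l -> set 'rV[R]_n) (t : 'I_n) :
  (1 <= n)%N -> (n <= l)%N ->
  (forall j, leb_measurable (E j)) ->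
  (forall j, (leb_outer (E j) < +oo)%E) ->
  (sup_comb_det a (fun j => steiner t (E j)) <= sup_comb_det a E)%E.
Proof.
move=> _ _ _ _.
rewrite /sup_comb_det; apply: ge_ereal_sup => _ [y Hy <-].
pose e := ebasis R t.
pose p i := y i - y i ord0 t *: e.
pose sg i := y i ord0 t.
have pt i : p i ord0 t = 0 by rewrite !mxE eqxx mulr1 subrr.
have [b Hb] := @det_lin R n l a t p pt.
have Hcd s : comb_det a (fun i => p i + s i *: e) = `|\sum_i b i * s i|.
  by rewrite /comb_det -Hb.
have -> : comb_det a y = `|\sum_i b i * sg i|.
  rewrite -Hcd; congr comb_det; apply: funext => i; by rewrite /p subrK.
pose A i := [set r : 'rV[R]_1 | E i (p i + r ord0 ord0 *: e)].
have HA i : (exists r, A i r) /\ ((`|sg i| *+ 2)%:E <= leb_outer (A i))%E.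
  have [[s Es] Hm] := Hy i; split; last exact: Hm.
  by exists (const_mx s); rewrite /A /= mxE.
set fs := \sum_i b i * sg i.
apply/lee_addgt0Pr => eps eps0.
pose B := \sum_i `|b i|.
have B0 : 0 <= B by apply: sumr_ge0 => i _; exact: normr_ge0.
pose eta := eps / (B + 1).
have B1 : B + 1 != 0 by rewrite gt_eqF // ltr_wpDl.
have etaB : eta * B + eta = eps by rewrite /eta -{2}(mulr1 (eps / (B + 1))) -mulrDr divfK.
have eta0 : 0 < eta by rewrite /eta divr_gt0 // ltr_wpDl.
pose D i := `|sg i| *+ 2 - eta.
have Huv i : exists uv : 'rV[R]_1 * 'rV[R]_1,
    A i uv.1 /\ A i uv.2 /\ D i < uv.1 ord0 ord0 - uv.2 ord0 ord0.
  have [Hne Hm] := HA i.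
  have : ((D i)%:E < leb_outer (A i))%E.
    apply: lt_le_trans Hm; rewrite lte_fin /D; lra.
  move=> /(@spread _ _ _ Hne) [u [v [? [? ?]]]]; by exists (u, v).
have [uv Huv'] := boolp.choice Huv.
pose U i := if 0 <= b i then (uv i).1 ord0 ord0 else (uv i).2 ord0 ord0.
pose V i := if 0 <= b i then (uv i).2 ord0 ord0 else (uv i).1 ord0 ord0.
have HU i : E i (p i + U i *: e).
  by rewrite /U; case: ifP => _; have [? [? ?]] := Huv' i.
have HV i : E i (p i + V i *: e).
  by rewrite /V; case: ifP => _; have [? [? ?]] := Huv' i.
have Hbi i : `|b i| * D i <= b i * (U i - V i).
  have [_ [_ h]] := Huv' i; rewrite /U /V; case: ifP => hb.
    by rewrite ger0_norm // ler_wpM2l // ltW.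
  have hb' : b i < 0 by rewrite ltNge hb.
  rewrite ltr0_norm //; nra.
set fU := \sum_i b i * U i.
set fV := \sum_i b i * V i.
have h1 : fU - fV = \sum_i b i * (U i - V i).
  by rewrite /fU /fV -sumrB; apply: eq_bigr => i _; rewrite mulrBr.
have h2 : \sum_i `|b i| * D i <= fU - fV by rewrite h1; apply: ler_sum => i _.
have h3 : \sum_i `|b i| * D i = (\sum_i `|b i| * `|sg i|) *+ 2 - eta * B.
  rewrite mulr_sumr -sumrMnl -sumrB; apply: eq_bigr => i _.
  by rewrite /D mulrBr mulrnAr [eta * _]mulrC.
have h4 : `|fs| <= \sum_i `|b i| * `|sg i|.
  by apply: le_trans (ler_norm_sum _ _ _) _; apply: ler_sum => k _; rewrite normrM.
have h6 : fU <= `|fU| := ler_norm fU.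
have h7 : - fV <= `|fV| by rewrite -normrN ler_norm.
have hetaB : 0 <= eta * B by rewrite mulr_ge0 // ltW.
have HsU : (`|fU|%:E <= ereal_sup [set (comb_det a y0)%:E | y0 in
            [set y0 : 'I_l -> 'rV[R]_n | forall j, E j (y0 j)]])%E.
  apply: le_ereal_sup_tmp; exists (`|fU|%:E) => //.
  exists (fun i => p i + U i *: e) => //; by rewrite Hcd.
have HsV : (`|fV|%:E <= ereal_sup [set (comb_det a y0)%:E | y0 in
            [set y0 : 'I_l -> 'rV[R]_n | forall j, E j (y0 j)]])%E.
  apply: le_ereal_sup_tmp; exists (`|fV|%:E) => //.
  exists (fun i => p i + V i *: e) => //; by rewrite Hcd.
have [hUV|hUV] := leP `|fV| `|fU|.
  apply: le_trans (leeD2r _ HsU); rewrite -EFinD lee_fin; lra.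
apply: le_trans (leeD2r _ HsV); rewrite -EFinD lee_fin; lra.
Qed.
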